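(* Let $m\in\mathbb{Z}^+$, let $\lambda_0,\dots,\lambda_{m-1},c_0,\dots,c_{m-1}\in\mathbb{R}$, let $X=\{0,1\}^{\mathbb{Z}}$ and $\Omega=\mathbb{Z}_m\times X$, and let $T:\Omega\to\Omega$, $T(k,x)=(k+1 \bmod m,\,T_1x)$, where $(T_1x)_n=x_{n+1}$ is the left shift. For $E\in\mathbb{R}$ define $A_E:\Omega\to SL(2,\mathbb{R})$ by $$A_E(k,x)=\begin{bmatrix}E-\lambda_kx_0-c_k & -1\\ 1 & 0\end{bmatrix},$$ and for $n\in\mathbb{Z}^+$ and $\omega\in\Omega$ put $A^n_{E,\omega}=A_E(T^{n-1}\omega)\cdots A_E(T\omega)A_E(\omega)$ (so that $A^n_{E,(0,x)}=A(n-1)\cdots A(0)$ with $A(j)=\begin{bmatrix}E-V_x(j)&-1\\1&0\end{bmatrix}$, $V_x(j)=\lambda_{j\bmod m}x_j+c_{j\bmod m}$). Then for every $E\in\mathbb{R}$, the cocycle $(T,A_E)$ is uniformly hyperbolic if and only if the finite set of matrices $\{M: M=A^m_{E,(0,x)}\text{ for some }x\in X\}$ is uniformly hyperbolic.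
   Context: The cocycle $(T,A_E)$ is the map $\Omega\times\mathbb{R}^2\to\Omega\times\mathbb{R}^2$, $(\omega,v)\mapsto(T\omega,A_E(\omega)v)$. The cocycle is uniformly hyperbolic if there exist $\lambda>1$ and $C>0$ such that $\|A^n_{E,\omega}\|>C\lambda^n$ for all $n\in\mathbb{Z}^+$ and all $\omega\in\Omega$. A set of matrices $\mathcal{S}\subset SL(2,\mathbb{R})$ is uniformly hyperbolic if there exists $\lambda>1$ such that for every $n\ge1$ and every product $M_{1}M_{2}\cdots M_{n}$ of $n$ matrices from $\mathcal{S}$ (repetitions allowed), $\|M_1\cdots M_n\|>\lambda^n$. *)

(* Defs.v *)
From HB Require Import structures.
From mathcomp Require Import all_boot all_order all_algebra.
From mathcomp Require Import classical_sets reals.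
Set Implicit Arguments. Unset Strict Implicit. Unset Printing Implicit Defensive.
Import Order.TTheory GRing.Theory Num.Theory.
Local Open Scope classical_set_scope.
Local Open Scope ring_scope.

Section Defs.
Variable R : realType.

Definition vnorm2 (v : 'cV[R]_2) : R := Num.sqrt (\sum_(i < 2) v i 0 ^+ 2).

Definition opnorm2 (A : 'M[R]_2) : R :=
  sup [set vnorm2 (A *m v) | v in [set v : 'cV[R]_2 | vnorm2 v = 1]].

Definition seqX := int -> bool.
Definition shift (x : seqX) : seqX := fun n => x (n + 1)%R.

Variable m : nat.
Definition Omega := ('I_m * seqX)%type.

Definition Tmap (w : Omega) : Omega := (ordS w.1, shift w.2).

Definition AE (lam c : 'I_m -> R) (E : R) (w : Omega) : 'M[R]_2 :=
  \matrix_(i < 2, j < 2)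
    if i == 0 :> nat then
      (if j == 0 :> nat then E - lam w.1 * (w.2 0%R : nat)%:R - c w.1 else -1)
    else (if j == 0 :> nat then 1 else 0).

Fixpoint cocycle_pow (lam c : 'I_m -> R) (E : R) (n : nat) (w : Omega)
  : 'M[R]_2 :=
  match n with
  | 0 => 1%:M
  | n'.+1 => AE lam c E (iter n' Tmap w) *m cocycle_pow lam c E n' w
  end.

Definition cocycle_UH (lam c : 'I_m -> R) (E : R) : Prop :=
  exists (l C : R), 1 < l /\ 0 < C /\
    forall (n : nat) (w : Omega), (0 < n)%N ->
      C * l ^+ n < opnorm2 (cocycle_pow lam c E n w).
End Defs.

Definition matset_UH (R : realType) (S : set 'M[R]_2) : Prop :=
  exists l : R, 1 < l /\
    forall (n : nat) (M : 'I_n -> 'M[R]_2), (0 < n)%N ->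
      (forall i, S (M i)) ->
      l ^+ n < opnorm2 (\big[mulmx/1%:M]_(i < n) M i).

(* Main.v *)
Require Import Defs.
From HB Require Import structures.
From mathcomp Require Import all_boot all_order all_algebra.
From mathcomp Require Import classical_sets reals boolp.
From mathcomp Require Import lra ring zify.
Import Order.TTheory GRing.Theory Num.Theory.
Local Open Scope classical_set_scope.
Local Open Scope ring_scope.

Lemma lift01 : lift ord0 (ord0 : 'I_1) = 1 :> 'I_2.
Proof. exact: val_inj. Qed.

Lemma vnorm2E {R : realType} (v : 'cV[R]_2) :
  vnorm2 v = Num.sqrt (v 0 0 ^+ 2 + v 1 0 ^+ 2).
Proof. rewrite /vnorm2 !big_ord_recl big_ord0 addr0. congr (Num.sqrt (_ + _ ^+ 2)); congr (v _ _); exact: val_inj. Qed.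

Lemma vnorm2_ge0 {R : realType} (v : 'cV[R]_2) : 0 <= vnorm2 v.
Proof. exact: sqrtr_ge0. Qed.

Lemma vnorm2_le {R : realType} (v : 'cV[R]_2) :
  vnorm2 v <= `|v 0 0| + `|v 1 0|.
Proof.
rewrite vnorm2E -(ger0_norm (addr_ge0 (normr_ge0 (v 0 0)) (normr_ge0 (v 1 0)))).
rewrite -sqrtr_sqr ler_sqrt ?sqr_ge0 //.
rewrite -[v 0 0 ^+ 2]real_normK ?num_real // -[v 1 0 ^+ 2]real_normK ?num_real //.
rewrite sqrrD.
have := mulr_ge0 (normr_ge0 (v 0 0)) (normr_ge0 (v 1 0)). lra.
Qed.

Lemma vnorm2_ge {R : realType} (v : 'cV[R]_2) (i : 'I_2) :
  `|v i 0| <= vnorm2 v.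
Proof.
rewrite vnorm2E -sqrtr_sqr ler_sqrt; last by rewrite addr_ge0 ?sqr_ge0.
have h0 := sqr_ge0 (v 0 0); have h1 := sqr_ge0 (v 1 0).
case: i => -[|[|//]] hi.
- have -> : Ordinal hi = 0 by apply: val_inj.
  lra.
- have -> : Ordinal hi = 1 by apply: val_inj.
  lra.
Qed.

Lemma vnorm2Z {R : realType} (a : R) (v : 'cV[R]_2) :
  vnorm2 (a *: v) = `|a| * vnorm2 v.
Proof.
rewrite !vnorm2E !mxE !exprMn -mulrDr sqrtrM ?sqr_ge0 // sqrtr_sqr //.
Qed.

Lemma mulmx2E {R : realType} (A : 'M[R]_2) (v : 'cV[R]_2) (i : 'I_2) :
  (A *m v) i 0 = A i 0 * v 0 0 + A i 1 * v 1 0.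
Proof. by rewrite mxE !big_ord_recl big_ord0 addr0 lift01. Qed.

Definition Snorm {R : realType} (A : 'M[R]_2) : R :=
  `|A 0 0| + `|A 0 1| + `|A 1 0| + `|A 1 1|.

Definition e0 (R : realType) : 'cV[R]_2 := \col_i (i == 0)%:R.

Lemma e0_unit (R : realType) : vnorm2 (e0 R) = 1.
Proof. by rewrite vnorm2E !mxE /= expr1n expr0n /= addr0 sqrtr1. Qed.

Definition opset {R : realType} (A : 'M[R]_2) :=
  [set vnorm2 (A *m v) | v in [set v : 'cV[R]_2 | vnorm2 v = 1]].

Lemma opset_ub {R : realType} (A : 'M[R]_2) : ubound (opset A) (Snorm A).
Proof.
move=> _ [v /= hv <-].
apply: le_trans; first exact: vnorm2_le.
rewrite !mulmx2E.
have b0 := vnorm2_ge v 0; have b1 := vnorm2_ge v 1; rewrite hv in b0 b1.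
have hh : forall a b : R, `|b| <= 1 -> `|a * b| <= `|a|.
  by move=> a b hb; rewrite normrM ler_piMr.
rewrite /Snorm.
have := ler_normD (A 0 0 * v 0 0) (A 0 1 * v 1 0).
have := ler_normD (A 1 0 * v 0 0) (A 1 1 * v 1 0).
have := hh (A 0 0) _ b0; have := hh (A 0 1) _ b1;
have := hh (A 1 0) _ b0; have := hh (A 1 1) _ b1.
lra.
Qed.

Lemma opset_ne {R : realType} (A : 'M[R]_2) : opset A !=set0.
Proof. by exists (vnorm2 (A *m e0 R)); exists (e0 R) => //; apply: e0_unit. Qed.

Lemma opnorm_le_S {R : realType} (A : 'M[R]_2) : opnorm2 A <= Snorm A.
Proof. exact: ge_sup (opset_ne A) (opset_ub A). Qed.

Lemma opnorm_ge {R : realType} (A : 'M[R]_2) (v : 'cV[R]_2) :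
  vnorm2 v = 1 -> vnorm2 (A *m v) <= opnorm2 A.
Proof.
move=> hv; apply: (ub_le_sup (E := opset A)).
  by exists (Snorm A); apply: opset_ub.
by exists v.
Qed.

Lemma opnorm_ge0 {R : realType} (A : 'M[R]_2) : 0 <= opnorm2 A.
Proof. exact: (le_trans (vnorm2_ge0 _) (opnorm_ge A _ (e0_unit R))). Qed.

Lemma opnorm_mulv {R : realType} (A : 'M[R]_2) (u : 'cV[R]_2) :
  vnorm2 (A *m u) <= opnorm2 A * vnorm2 u.
Proof.
have [u0|un0] := eqVneq (vnorm2 u) 0.
  have hu : u = 0.
    apply/matrixP => i j; rewrite ord1 mxE; apply/eqP.
    by rewrite -normr_le0 -u0 vnorm2_ge.
  by rewrite u0 mulr0 hu mulmx0 vnorm2E mxE expr0n /= add0r mxE expr0n /= sqrtr0.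
have hpos : 0 < vnorm2 u by rewrite lt_neqAle eq_sym un0 vnorm2_ge0.
have hu : u = vnorm2 u *: ((vnorm2 u)^-1 *: u) by rewrite scalerA divff // scale1r.
rewrite [in X in vnorm2 (A *m X)]hu -scalemxAr vnorm2Z ger0_norm ?vnorm2_ge0 //.
rewrite [X in _ <= X]mulrC ler_pM2l //; apply: opnorm_ge.
by rewrite vnorm2Z ger0_norm ?invr_ge0 ?vnorm2_ge0 // mulVf.
Qed.

Lemma opnorm_mul {R : realType} (A B : 'M[R]_2) :
  opnorm2 (A *m B) <= opnorm2 A * opnorm2 B.
Proof.
apply: ge_sup; first exact: opset_ne.
move=> _ [v /= hv <-]; rewrite -mulmxA.
apply: le_trans (opnorm_mulv _ _) _.
by rewrite ler_wpM2l ?opnorm_ge0 // -[X in _ <= X]mulr1 -hv opnorm_mulv.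
Qed.

Lemma opnorm_1 {R : realType} : opnorm2 (1%:M : 'M[R]_2) <= 1.
Proof.
apply: ge_sup; first exact: opset_ne.
by move=> _ [v /= hv <-]; rewrite mul1mx hv.
Qed.

Lemma cocycle_powD {R : realType} {m : nat} (lam c : 'I_m -> R) E a b w :
  cocycle_pow lam c E (a + b) w =
  cocycle_pow lam c E a (iter b (@Tmap m) w) *m cocycle_pow lam c E b w.
Proof.
elim: a => [|a IH]; first by rewrite add0n mul1mx.
by rewrite addSn /= IH mulmxA iterD.
Qed.

Lemma iter_Tmap {m : nat} k (w : Omega m) :
  iter k (@Tmap m) w = (iter k (@ordS m) w.1, iter k (@shift) w.2).
Proof. by elim: k => [|k IH] /=; [case: w | rewrite IH]. Qed.

Lemma iter_ordS {m : nat} k (i : 'I_m) : val (iter k (@ordS m) i) = ((i + k) %% m)%N.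
Proof.
elim: k => [|k IH] /=; first by rewrite addn0 modn_small.
rewrite IH. by rewrite -addn1 modnDml addn1 addnS.
Qed.

Lemma iter_shift k (x : seqX) z : iter k shift x z = x (z + k%:Z).
Proof.
elim: k z => [|k IH] z /=; first by rewrite addr0.
by rewrite /shift IH -addrA -[in (1 + k%:Z)]addrC -PoszD addn1.
Qed.

Lemma cocycle_pow_ext {R : realType} {m : nat} (lam c : 'I_m -> R) E n
   (i : 'I_m) (x y : seqX) :
  (forall j, (j < n)%N -> x j%:Z = y j%:Z) ->
  cocycle_pow lam c E n (i, x) = cocycle_pow lam c E n (i, y).
Proof.
elim: n => [//|n IH] hxy /=.
rewrite IH; last by move=> j hj; apply: hxy; apply: ltnW.
congr (_ *m _).
rewrite !iter_Tmap /AE /=; apply/matrixP => a b; rewrite !mxE.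
by rewrite !iter_shift add0r hxy.
Qed.

Definition Kb {R : realType} {m : nat} (lam c : 'I_m -> R) (E : R) : R :=
  `|E| + \sum_i `|lam i| + \sum_i `|c i| + 2.

Lemma le_sum_abs {R : realType} {m : nat} (f : 'I_m -> R) k :
  `|f k| <= \sum_i `|f i|.
Proof.
rewrite (bigD1 k) //= lerDl; apply: sumr_ge0 => i _; exact: normr_ge0.
Qed.

Lemma Kb_ge1 {R : realType} {m : nat} (lam c : 'I_m -> R) E : 1 <= Kb lam c E.
Proof.
rewrite /Kb.
have h1 : 0 <= \sum_i `|lam i| by apply: sumr_ge0 => i _; exact: normr_ge0.
have h2 : 0 <= \sum_i `|c i| by apply: sumr_ge0 => i _; exact: normr_ge0.
have := normr_ge0 E. lra.
Qed.

Lemma diag_bound {R : realType} {m : nat} (lam c : 'I_m -> R) E (w : Omega m) :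
  `|E - lam w.1 * (w.2 0%R : nat)%:R - c w.1| + 2 <= Kb lam c E.
Proof.
rewrite /Kb.
have hb : `|(w.2 0%R : nat)%:R : R| <= 1 by case: (w.2 0%R); rewrite ?normr1 ?normr0.
have h1 := le_sum_abs lam w.1; have h2 := le_sum_abs c w.1.
have h3 : `|lam w.1 * (w.2 0%R : nat)%:R| <= `|lam w.1|.
  by rewrite normrM ler_piMr.
have h4 := ler_normB (E - lam w.1 * (w.2 0%R : nat)%:R) (c w.1).
have h5 := ler_normB E (lam w.1 * (w.2 0%R : nat)%:R).
lra.
Qed.

Lemma Snorm_AE {R : realType} {m : nat} (lam c : 'I_m -> R) E (w : Omega m) :
  Snorm (AE lam c E w) <= Kb lam c E.
Proof.
rewrite /Snorm !mxE /= normrN normr1 normr0 addr0 -addrA.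
exact: diag_bound.
Qed.

Definition Binv {R : realType} {m : nat} (lam c : 'I_m -> R) (E : R) (w : Omega m)
  : 'M[R]_2 :=
  \matrix_(i < 2, j < 2)
    if i == 0 :> nat then (if j == 0 :> nat then 0 else 1)
    else (if j == 0 :> nat then -1 else E - lam w.1 * (w.2 0%R : nat)%:R - c w.1).

Lemma Snorm_Binv {R : realType} {m : nat} (lam c : 'I_m -> R) E (w : Omega m) :
  Snorm (Binv lam c E w) <= Kb lam c E.
Proof.
rewrite /Snorm !mxE /= normrN normr1 normr0 add0r.
have := diag_bound lam c E w; lra.
Qed.

Lemma mulmx22E {R : realType} (A B : 'M[R]_2) i j :
  (A *m B) i j = A i 0 * B 0 j + A i 1 * B 1 j.
Proof. by rewrite mxE !big_ord_recl big_ord0 addr0 lift01. Qed.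

Lemma AE_Binv {R : realType} {m : nat} (lam c : 'I_m -> R) E (w : Omega m) :
  AE lam c E w *m Binv lam c E w = 1%:M.
Proof.
apply/matrixP => i j; rewrite mulmx22E !mxE /=.
case: i => -[|[|//]] hi; case: j => -[|[|//]] hj /=;
  rewrite ?mulr0 ?mul0r ?mulr1 ?mul1r ?add0r ?addr0 ?mulN1r ?mulrN1 //; try lra.
Qed.

Fixpoint cinv {R : realType} {m : nat} (lam c : 'I_m -> R) (E : R) (n : nat)
  (w : Omega m) : 'M[R]_2 :=
  match n with
  | 0 => 1%:M
  | n'.+1 => cinv lam c E n' w *m Binv lam c E (iter n' (@Tmap m) w)
  end.

Lemma cocycle_cinv {R : realType} {m : nat} (lam c : 'I_m -> R) E n w :
  cocycle_pow lam c E n w *m cinv lam c E n w = 1%:M.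
Proof.
elim: n => [|n IH] /=; first by rewrite mul1mx.
by rewrite -mulmxA [X in _ *m X]mulmxA IH mul1mx AE_Binv.
Qed.

Lemma op_cocycle {R : realType} {m : nat} (lam c : 'I_m -> R) E n w :
  opnorm2 (cocycle_pow lam c E n w) <= Kb lam c E ^+ n.
Proof.
elim: n => [|n IH] /=; first by rewrite expr0 opnorm_1.
apply: le_trans; first exact: opnorm_mul.
rewrite exprS ler_pM ?opnorm_ge0 //.
exact: le_trans (opnorm_le_S _) (Snorm_AE _ _ _ _).
Qed.

Lemma op_cinv {R : realType} {m : nat} (lam c : 'I_m -> R) E n w :
  opnorm2 (cinv lam c E n w) <= Kb lam c E ^+ n.
Proof.
elim: n => [|n IH] /=; first by rewrite expr0 opnorm_1.
apply: le_trans; first exact: opnorm_mul.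
rewrite exprSr ler_pM ?opnorm_ge0 //.
exact: le_trans (opnorm_le_S _) (Snorm_Binv _ _ _ _).
Qed.

Definition prodS {R : realType} (S : set 'M[R]_2) (j : nat) (P : 'M[R]_2) :=
  exists M : 'I_j -> 'M[R]_2, (forall i, S (M i)) /\ P = \big[mulmx/1%:M]_(i < j) M i.

Lemma prodS0 {R : realType} (S : set 'M[R]_2) : prodS S 0 1%:M.
Proof. by exists (fun _ => 1%:M); split => [[]//|]; rewrite big_ord0. Qed.

Lemma prodS_cons {R : realType} (S : set 'M[R]_2) j B P :
  S B -> prodS S j P -> prodS S j.+1 (B *m P).
Proof.
move=> SB [M [SM ->]].
exists (fun i => if unlift ord0 i is Some i' then M i' else B); split.
  by move=> i; case: (unlift ord0 i).
rewrite big_ord_recl unlift_none; congr (_ *m _).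
by apply: eq_bigr => i _; rewrite liftK.
Qed.

Lemma prodS_inv {R : realType} {S : set 'M[R]_2} {j P} :
  prodS S j.+1 P -> exists B P', [/\ S B, prodS S j P' & P = B *m P'].
Proof.
move=> [M [SM ->]]; exists (M ord0), (\big[mulmx/1%:M]_(i < j) M (lift ord0 i)).
split => //; last by rewrite big_ord_recl.
by exists (fun i => M (lift ord0 i)).
Qed.

Lemma prodS0_inv {R : realType} {S : set 'M[R]_2} {P} : prodS S 0 P -> P = 1%:M.
Proof. by move=> [M [_ ->]]; rewrite big_ord0. Qed.

Lemma prodS_mul {R : realType} (S : set 'M[R]_2) a b P Q :
  prodS S a P -> prodS S b Q -> prodS S (a + b) (P *m Q).
Proof.
elim: a P => [|a IH] P hP hQ.
  by rewrite (prodS0_inv hP) mul1mx add0n.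
have [B [P' [SB hP' ->]]] := prodS_inv hP.
rewrite addSn -mulmxA; apply: prodS_cons => //; exact: IH.
Qed.

Fixpoint mpow {R : realType} (P : 'M[R]_2) (k : nat) : 'M[R]_2 :=
  match k with 0 => 1%:M | k'.+1 => P *m mpow P k' end.

Lemma prodS_pow {R : realType} (S : set 'M[R]_2) n P k :
  prodS S n P -> prodS S (k * n) (mpow P k).
Proof.
move=> hP; elim: k => [|k IH] /=; first exact: prodS0.
rewrite mulSn; exact: prodS_mul.
Qed.

Lemma op_mpow {R : realType} (P : 'M[R]_2) k : opnorm2 (mpow P k) <= opnorm2 P ^+ k.
Proof.
elim: k => [|k IH] /=; first by rewrite expr0 opnorm_1.
apply: le_trans; first exact: opnorm_mul.
by rewrite exprS ler_wpM2l ?opnorm_ge0.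
Qed.

Definition Sset {R : realType} {m : nat} (hm : (0 < m)%N) (lam c : 'I_m -> R) E :=
  [set M : 'M[R]_2 | exists x : seqX, M = cocycle_pow lam c E m (Ordinal hm, x)].

Lemma iter_Tmap0 {m : nat} (hm : (0 < m)%N) j (x : seqX) :
  iter (j * m) (@Tmap m) (Ordinal hm, x) = (Ordinal hm, iter (j * m) shift x).
Proof.
rewrite iter_Tmap /=; congr (_, _); apply: val_inj.
by rewrite iter_ordS /= add0n modnMl.
Qed.

Lemma glue {R : realType} {m : nat} (hm : (0 < m)%N) (lam c : 'I_m -> R) E j P :
  prodS (Sset hm lam c E) j P ->
  exists x, P = cocycle_pow lam c E (j * m) (Ordinal hm, x).
Proof.
elim: j P => [|j IH] P hP.
  by exists (fun _ => false); rewrite (prodS0_inv hP).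
have [B [P' [[x0 ->] hP' ->]]] := prodS_inv hP.
have [x1 ->] := IH _ hP'.
exists (fun z => if z < (j * m)%N%:Z then x1 z else x0 (z - (j * m)%N%:Z)).
rewrite mulSn cocycle_powD iter_Tmap0; congr (_ *m _).
  apply: cocycle_pow_ext => i hi.
  by rewrite iter_shift -PoszD ltz_nat ltnNge leq_addl /= PoszD addrK.
apply: cocycle_pow_ext => i hi.
by rewrite ltz_nat (leq_trans hi) // leq_pmull.
Qed.

Lemma bern_up {R : realType} (q : R) k : 1 <= q -> 1 + k%:R * (q - 1) <= q ^+ k.
Proof.
move=> hq; elim: k => [|k IH]; first by rewrite mul0r addr0 expr0.
rewrite exprS -natr1.
have h1 : 0 <= k%:R * ((q - 1) * (q - 1)) :> R.
  by rewrite mulr_ge0 // mulr_ge0 // subr_ge0.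
have h2 : q * (1 + k%:R * (q - 1)) <= q * q ^+ k.
  by rewrite ler_wpM2l //; apply: le_trans hq; rewrite ler01.
nra.
Qed.

Lemma lim_lemma {R : realType} (a b c : R) : 0 < c -> 1 <= b ->
  (forall k, (0 < k)%N -> c * b ^+ k < a ^+ k) -> b <= a.
Proof.
move=> hc hb hk.
have ha : 0 < a.
  have := hk 1%N isT; rewrite !expr1 => h.
  have : 0 < c * b by rewrite mulr_gt0 // (lt_le_trans ltr01).
  lra.
rewrite leNgt; apply/negP => hab.
pose q := b / a.
have hq : 1 < q by rewrite /q ltr_pdivlMr // mul1r.
pose k := (Num.Def.archi_bound ((c * (q - 1))^-1)).+1.
have hkb := @archi_boundP R ((c * (q - 1))^-1).
have hcq : 0 < c * (q - 1) by rewrite mulr_gt0 // subr_gt0.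
have hinv : 0 <= (c * (q - 1))^-1 by rewrite invr_ge0 ltW.
have hkx : (c * (q - 1))^-1 < k%:R.
  rewrite /k -natr1; have := hkb hinv; lra.
have hk1 : 1 < c * (k%:R * (q - 1)).
  have -> : c * (k%:R * (q - 1)) = c * (q - 1) * k%:R by ring.
  rewrite -[X in X < _](divff (lt0r_neq0 hcq)) ltr_pM2l //.
have := bern_up q k (ltW hq) => hb2.
have hqk : c * q ^+ k > 1.
  have : c * (1 + k%:R * (q - 1)) <= c * q ^+ k by rewrite ler_wpM2l // ltW.
  have : 0 <= c by exact: ltW.
  nra.
have := hk k isT.
have -> : b = q * a by rewrite /q mulfVK // lt0r_neq0.
rewrite exprMn mulrA => h.
have hak : 0 < a ^+ k by rewrite exprn_gt0.
have : a ^+ k < c * q ^+ k * a ^+ k by rewrite -[X in X < _]mul1r ltr_pM2r.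
lra.
Qed.

Lemma bern_down {R : realType} (d : R) k : 0 <= d ->
  (1 + d) ^+ k * (1 - k%:R * d) <= 1.
Proof.
move=> hd; elim: k => [|k IH]; first by rewrite expr0 mul1r mul0r subr0.
rewrite exprSr -natr1.
have h1 : (1 + d) * (1 - (k%:R + 1) * d) <= 1 - k%:R * d.
  have : 0 <= k%:R * (d * d) :> R by rewrite mulr_ge0 ?mulr_ge0.
  nra.
have h0 : 0 <= (1 + d) ^+ k by rewrite exprn_ge0 // addr_ge0.
have : (1 + d) ^+ k * ((1 + d) * (1 - (k%:R + 1) * d)) <= (1 + d) ^+ k * (1 - k%:R * d).
  by rewrite ler_wpM2l.
rewrite mulrA; lra.
Qed.

Lemma root_exists {R : realType} (l : R) m : 1 < l -> (0 < m)%N ->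
  exists l', 1 < l' /\ l' ^+ m <= l.
Proof.
move=> hl hm.
have hm' : 0 < m%:R :> R by rewrite ltr0n.
pose d := (1 - l^-1) / m%:R.
have hl0 : 0 < l by apply: lt_trans hl.
have hli : l^-1 < 1 by rewrite invf_lt1.
have hd : 0 < d by rewrite /d divr_gt0 // subr_gt0.
exists (1 + d); split; first lra.
have := bern_down d m (ltW hd).
have -> : 1 - m%:R * d = l^-1 by rewrite /d mulrC divfK ?lt0r_neq0 //; lra.
move=> h.
have : (1 + d) ^+ m * l^-1 * l <= 1 * l by rewrite ler_wpM2r // ltW.
by rewrite mulfVK ?lt0r_neq0 // mul1r.
Qed.

Lemma unglue {R : realType} {m : nat} (hm : (0 < m)%N) (lam c : 'I_m -> R) E j x :
  prodS (Sset hm lam c E) j (cocycle_pow lam c E (j * m) (Ordinal hm, x)).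
Proof.
elim: j => [|j IH]; first exact: prodS0.
rewrite mulSn cocycle_powD iter_Tmap0; apply: prodS_cons => //.
by exists (iter (j * m) shift x).
Qed.

Theorem lemma1 (R : realType) (m : nat) (hm : (0 < m)%N)
  (lam c : 'I_m -> R) (E : R) :
  cocycle_UH lam c E <->
  matset_UH [set M : 'M[R]_2 |
     exists x : seqX, M = cocycle_pow lam c E m (Ordinal hm, x)].
Proof.
split.
- move=> [l [C [hl [hC H]]]].
  pose L := l ^+ m.
  have hL : 1 < L by rewrite /L exprn_egt1 // -lt0n hm.
  exists ((1 + L) / 2); split; first lra.
  move=> n M hn SM.
  set P := \big[mulmx/1%:M]_(i < n) M i.
  have hP : prodS (Sset hm lam c E) n P by exists M.
  have key : forall k, (0 < k)%N -> C * (L ^+ n) ^+ k < opnorm2 P ^+ k.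
    move=> k hk.
    have [x hx] := glue hm lam c E _ _ (@prodS_pow _ _ _ _ k hP).
    have hpos : (0 < k * n * m)%N by rewrite !muln_gt0 hk hn hm.
    have := H _ (Ordinal hm, x) hpos; rewrite -hx => h1.
    apply: lt_le_trans (op_mpow P k).
    suff -> : (L ^+ n) ^+ k = l ^+ (k * n * m) by [].
    by rewrite /L -!exprM; congr (_ ^+ _); lia.
  have hLn : 1 <= L ^+ n by rewrite exprn_ege1 // ltW.
  have hle := lim_lemma (opnorm2 P) (L ^+ n) C hC hLn key.
  apply: lt_le_trans hle.
  rewrite ltrXn2r; [by rewrite -lt0n hn | lra | lra].
- move=> [l [hl H]].
  have [l' [hl' hl'm]] := root_exists l m hl hm.
  set K := Kb lam c E.
  have hK : 1 <= K := Kb_ge1 lam c E.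
  have hK3 : 0 < K ^+ (3 * m) by rewrite exprn_gt0 // (lt_le_trans ltr01).
  exists l', (K ^+ (3 * m))^-1; split => //; split; first by rewrite invr_gt0.
  move=> n [k x] hn.
  pose h := (m - k)%N.
  pose j := (n %/ m).+1.
  pose d := (h + j * m - n)%N.
  have hkm : (k < m)%N := ltn_ord k.
  have hjn : (n < j * m)%N by apply: ltn_ceil.
  have hdn : (d + n = j * m + h)%N by rewrite /d /h; lia.
  have hd2 : (d <= 2 * m)%N by rewrite /d /h /j; have := leq_divM n m; lia.
  have hh : (h <= m)%N by rewrite /h leq_subr.
  have hw : iter h (@Tmap m) (k, x) = (Ordinal hm, iter h shift x).
    rewrite iter_Tmap /=; congr (_, _); apply: val_inj.
    by rewrite iter_ordS /= /h subnKC ?modnn // ltnW.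
  set Q := cocycle_pow lam c E (j * m) (Ordinal hm, iter h shift x).
  have [M [SM hQ]] := unglue hm lam c E j (iter h shift x).
  have hlQ : l ^+ j < opnorm2 Q by rewrite /Q hQ; apply: H.
  set An := cocycle_pow lam c E n (k, x).
  have eQ : Q = cocycle_pow lam c E d (iter n (@Tmap m) (k, x)) *m An
                *m cinv lam c E h (k, x).
    rewrite -cocycle_powD hdn cocycle_powD hw -/Q -mulmxA cocycle_cinv.
    by rewrite mulmx1.
  have hopQ : opnorm2 Q <= K ^+ (3 * m) * opnorm2 An.
    rewrite eQ.
    apply: le_trans; first exact: opnorm_mul.
    have h1 := op_cinv lam c E h (k, x).
    have h2 := op_cocycle lam c E d (iter n (@Tmap m) (k, x)).
    have h3 := opnorm_mul (cocycle_pow lam c E d (iter n (@Tmap m) (k, x))) An.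
    have hKd : K ^+ d <= K ^+ (2 * m) by apply: ler_weXn2l.
    have hKh : K ^+ h <= K ^+ m by apply: ler_weXn2l.
    have e3 : K ^+ (3 * m) = K ^+ (2 * m) * K ^+ m by rewrite -exprD; congr (_ ^+ _); lia.
    have g0 := opnorm_ge0 An.
    have g1 := opnorm_ge0 (cinv lam c E h (k, x)).
    have g2 := opnorm_ge0 (cocycle_pow lam c E d (iter n (@Tmap m) (k, x))).
    have g3 : 0 <= K ^+ d by rewrite exprn_ge0 // (le_trans ler01).
    have g4 : 0 <= K ^+ h by rewrite exprn_ge0 // (le_trans ler01).
    set a := opnorm2 (cinv lam c E h (k, x)) in h1 g1 *.
    set b := opnorm2 (cocycle_pow lam c E d (iter n (@Tmap m) (k, x))) in h2 h3 g2 *.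
    set o := opnorm2 An in g0 h3 *.
    set o2 := opnorm2 (cocycle_pow lam c E d (iter n (@Tmap m) (k, x)) *m An) in h3 *.
    rewrite e3.
    have s1 : o2 * a <= (b * o) * a by rewrite ler_wpM2r.
    have s2 : (b * o) * a <= (K ^+ (2 * m) * o) * K ^+ m.
      apply: ler_pM; rewrite ?mulr_ge0 //.
        by apply: ler_wpM2r => //; apply: le_trans hKd.
      exact: le_trans hKh.
    apply: le_trans s1 _; apply: le_trans s2 _.
    by rewrite mulrAC.
  have hlj : l' ^+ n <= l ^+ j.
    apply: (@le_trans _ _ (l' ^+ (m * j))).
      by apply: ler_weXn2l; [exact: ltW | rewrite mulnC ltnW].
    rewrite exprM; rewrite ler_pXn2r // ?nnegrE ?exprn_ge0 //; [lra|lra].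
  have : l ^+ j < K ^+ (3 * m) * opnorm2 An by apply: lt_le_trans hopQ.
  rewrite -ltr_pdivrMl // => hfin.
  apply: le_lt_trans hfin.
  by rewrite ler_wpM2l // invr_ge0 ltW.
Qed.
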